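(* Let $\mathcal{T}$ be a tangle of order $k$ in a connectivity system $(E,\lambda)$, and let $\mathcal{S}$ be a tree compatible set. Let $\Phi=(P_1,\ldots, P_n)$ be a $k$-flower in $\mathcal{T}$ of $\mathcal{S}$-order at least two with no $\mathcal{T}$-loose petals. If $X\subseteq E-P_1$ is a non-empty $\mathcal{T}$-weak set such that $P_1\cup X$ is $k$-separating, then: (i) $\Phi '=(P_1\cup X, P_2-X,\ldots, P_n-X)$ is a $k$-flower in $\mathcal{T}$ that is $\mathcal{T}$-equivalent to $\Phi$ with respect to $\mathcal{S}$; (ii) $\mathrm{fcl}_{\mathcal{T}}(P_1)=\mathrm{fcl}_{\mathcal{T}}(P_1\cup X)$ and $\mathrm{fcl}_{\mathcal{T}}(P_i-X)=\mathrm{fcl}_{\mathcal{T}}(P_i)$ for all $i\in \{2,\dots,n\}$.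
   Context: A connectivity system is a pair $(E,\lambda)$ with $E$ finite and $\lambda$ an integer-valued symmetric submodular function on subsets of $E$. $X$ is $k$-separating if $\lambda(X)\le k$; a $k$-separation is an unordered partition $(X,E-X)$ with $\lambda(X)\le k$. A tangle of order $k$ is a collection $\mathcal T$ of subsets of $E$ with (T1) $\lambda(A)<k$ for $A\in\mathcal T$; (T2) if $\lambda(A)\le k-1$ then $A$ or $E-A$ is in $\mathcal T$; (T3) $A\cup B\cup C\ne E$ for $A,B,C\in\mathcal T$; (T4) $E-\{e\}\notin\mathcal T$. A set is $\mathcal T$-weak if contained in a member of $\mathcal T$, otherwise $\mathcal T$-strong; partitions/$k$-separations are $\mathcal T$-strong if all parts are. A $\mathcal T$-strong $k$-separating $X$ is fully closed if $X\cup Y$ is not $k$-separating for every nonempty $\mathcal T$-weak $Y\subseteq E-X$; $\mathrm{fcl}_{\mathcal T}(X)$ is the intersection of all fully closed $k$-separating sets containing $X$. $\mathcal T$-strong $k$-separations $(X,Y),(X',Y')$ are $\mathcal T$-equivalent if $\{\mathrm{fcl}_{\mathcal T}(X),\mathrm{fcl}_{\mathcal T}(Y)\}=\{\mathrm{fcl}_{\mathcal T}(X'),\mathrm{fcl}_{\mathcal T}(Y')\}$. $X$ is $\mathcal T$-sequential if it is $k$-separating, $E-X$ is $\mathcal T$-strong and $\mathrm{fcl}_{\mathcal T}(E-X)=E$. Let $\mathcal S$ be a set of non-$\mathcal T$-sequential $k$-separating sets with $\mathcal T$-strong complements; a $(k,\mathcal S)$-separation is a $k$-separation $(X,E-X)$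 with $X,E-X\in\mathcal S$. $\mathcal S$ is tree compatible if (S1) any $\mathcal T$-strong $k$-separation $\mathcal T$-equivalent to a $(k,\mathcal S)$-separation is a $(k,\mathcal S)$-separation, and (S2) if $X\in\mathcal S$ and $(Y,E-Y)$ is a $\mathcal T$-strong $k$-separation with $X\subseteq Y$ then $Y\in\mathcal S$. A $k$-flower in $\mathcal T$ is a $\mathcal T$-strong partition $(P_1,\dots,P_n)$ of $E$ with $P_i$ and $P_i\cup P_{i+1}$ $k$-separating for all $i$ (mod $n$); it displays $(X,E-X)$ if $X$ is a union of petals. $\Phi_1\preccurlyeq_{\mathcal S}\Phi_2$ if each $(k,\mathcal S)$-separation displayed by $\Phi_1$ is $\mathcal T$-equivalent to one displayed by $\Phi_2$; $\mathcal T$-equivalence with respect to $\mathcal S$ means both directions hold. The $\mathcal S$-order of $\Phi$ is the minimum number of petals of a $k$-flower equivalent to $\Phi$. A $k$-flower is a $k$-anemone if every nonempty union of petals is $k$-separating. For $n\ge2$, a petal $P_i$ is $\mathcal T$-loose if $P_i\subseteq\mathrm{fcl}_{\mathcal T}(P_j)$ for some petal $P_j\ne P_i$ that is consecutive to $P_i$ in the cyclic order (for a $k$-anemone, any other petal). *)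

(* Defs.v *)
From HB Require Import structures.
From mathcomp Require Import all_boot all_order all_algebra.
Set Implicit Arguments. Unset Strict Implicit. Unset Printing Implicit Defensive.
Import Order.TTheory GRing.Theory Num.Theory.
Local Open Scope ring_scope.

Section Connectivity.
Variables (E : finType) (lam : {set E} -> int) (k : int) (T : {set {set E}}).

Definition connectivity_system : Prop :=
  (forall A : {set E}, lam (~: A) = lam A) /\
  (forall A B : {set E}, lam (A :|: B) + lam (A :&: B) <= lam A + lam B).

Definition kseparating (X : {set E}) : bool := lam X <= k.

Definition tangle : Prop :=
  (forall A, A \in T -> lam A < k) /\
  (forall A, lam A <= k - 1 -> (A \in T) \/ (~: A \in T)) /\
  (forall A B C, A \in T -> B \in T -> C \in T -> A :|: B :|: C != setT) /\
  (forall e : E, ~: [set e] \notin T).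

Definition weak (Y : {set E}) : bool := [exists A in T, Y \subset A].
Definition strong (Y : {set E}) : bool := ~~ weak Y.

Definition fully_closed (X : {set E}) : bool :=
  [&& strong X, kseparating X &
   [forall Y : {set E},
      [&& Y != set0, weak Y & Y \subset ~: X] ==> ~~ kseparating (X :|: Y)]].

Definition fcl (X : {set E}) : {set E} :=
  \bigcap_(Y | fully_closed Y && (X \subset Y)) Y.

Definition strong_ksep (X : {set E}) : bool :=
  [&& kseparating X, strong X & strong (~: X)].

Definition T_equiv (X X' : {set E}) : bool :=
  [set fcl X; fcl (~: X)] == [set fcl X'; fcl (~: X')].

Definition T_sequential (X : {set E}) : bool :=
  [&& kseparating X, strong (~: X) & fcl (~: X) == setT].

Section S.
Variable S : {set {set E}}.

Definition kS_sep (X : {set E}) : bool :=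
  [&& kseparating X, X \in S & ~: X \in S].

Definition tree_compatible : Prop :=
  (forall X, X \in S -> [&& kseparating X, ~~ T_sequential X & strong (~: X)]) /\
  (forall X Y, kS_sep X -> strong_ksep Y -> T_equiv X Y -> kS_sep Y) /\
  (forall X Y, X \in S -> strong_ksep Y -> X \subset Y -> Y \in S).

(* flowers are represented as sequences of petals P_1 :: ... :: P_n (indices from 0) *)
Definition petal (F : seq {set E}) (i : nat) : {set E} := nth set0 F i.

Definition kflower (F : seq {set E}) : Prop :=
  (forall i j, (i < size F)%N -> (j < size F)%N -> i != j ->
     [disjoint petal F i & petal F j]) /\
  (\bigcup_(i < size F) petal F i = setT) /\
  (forall i, (i < size F)%N ->
     [&& strong (petal F i), kseparating (petal F i) &
         kseparating (petal F i :|: petal F ((i.+1 %% size F)%N))]).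

Definition displays (F : seq {set E}) (X : {set E}) : Prop :=
  exists I : {set 'I_(size F)}, X = \bigcup_(i in I) petal F i.

Definition flower_preceq (F1 F2 : seq {set E}) : Prop :=
  forall X, displays F1 X -> kS_sep X ->
    exists Y, [/\ displays F2 Y, kS_sep Y & T_equiv X Y].

Definition flower_equiv (F1 F2 : seq {set E}) : Prop :=
  flower_preceq F1 F2 /\ flower_preceq F2 F1.

(* the S-order of F (min number of petals of an equivalent k-flower) is >= m *)
Definition S_order_ge (m : nat) (F : seq {set E}) : Prop :=
  forall G, kflower G -> flower_equiv F G -> (m <= size G)%N.

Definition anemone (F : seq {set E}) : Prop :=
  kflower F /\
  forall I : {set 'I_(size F)}, I != set0 -> kseparating (\bigcup_(i in I) petal F i).

Definition T_loose (F : seq {set E}) (i : nat) : Prop :=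
  exists j, [/\ (j < size F)%N, j != i,
     (j == (i.+1 %% size F)%N) || (i == (j.+1 %% size F)%N) \/ anemone F &
     petal F i \subset fcl (petal F j)].

Definition no_loose_petals (F : seq {set E}) : Prop :=
  forall i, (i < size F)%N -> ~ T_loose F i.

End S.
End Connectivity.

(* Main.v *)
Require Import Defs.
From HB Require Import structures.
From mathcomp Require Import all_boot all_order all_algebra zify.
Set Implicit Arguments. Unset Strict Implicit. Unset Printing Implicit Defensive.
Import Order.TTheory GRing.Theory Num.Theory.
Local Open Scope ring_scope.

Ltac sdec :=
  repeat match goal with |- context [?y \in ?A] => case: (y \in A) end;
  try (intros; simpl in *; congruence).

Section Basic.
Variables (E : finType) (lam : {set E} -> int) (k : int) (T : {set {set E}}).
Hypothesis hcs : connectivity_system lam.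
Hypothesis ht : tangle lam k T.

Implicit Types A B C D W Y : {set E}.
Implicit Types (J : pred nat) (Fs : seq {set E}).
Local Notation ks := (kseparating lam k).
Local Notation weak := (weak T).
Local Notation strong := (strong T).
Local Notation fcl := (fcl lam k T).

Lemma lamC A : lam (~: A) = lam A.
Proof. by case: hcs. Qed.

Lemma lamsub A B : lam (A :|: B) + lam (A :&: B) <= lam A + lam B.
Proof. by case: hcs. Qed.

Lemma lamT : lam setT = lam set0.
Proof. by rewrite -setC0 lamC. Qed.

Lemma lam0 A : lam set0 <= lam A.
Proof.
have := lamsub A (~: A); rewrite setUCr setICr lamT lamC. lia.
Qed.

Lemma weakS A B : A \subset B -> weak B -> weak A.
Proof.
move=> AB /exists_inP [C CT BC]; apply/exists_inP; exists C => //.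
exact: subset_trans BC.
Qed.

Lemma strongS A B : strong A -> A \subset B -> strong B.
Proof. by move=> /negP sA AB; apply/negP => /(weakS AB). Qed.

Lemma weakU3 A B C : weak A -> weak B -> weak C -> A :|: B :|: C != setT.
Proof.
case: ht => _ [_ [t3 _]].
move=> /exists_inP [A' A'T AA'] /exists_inP [B' B'T BB'] /exists_inP [C' C'T CC'].
apply/negP => /eqP H; move: (t3 _ _ _ A'T B'T C'T); rewrite -subTset -H => /negP; apply.
by rewrite setUSS // setUSS.
Qed.

Lemma ge_k A : strong A -> strong (~: A) -> k <= lam A.
Proof.
case: ht => _ [t2 _] sA sAc; rewrite leNgt; apply/negP => lt.
have: lam A <= k - 1 by lia.
move/t2 => [] H.
  by move/negP: sA; apply; apply/exists_inP; exists A.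
by move/negP: sAc; apply; apply/exists_inP; exists (~: A).
Qed.

Lemma fcl_sup A : A \subset fcl A.
Proof. by apply/bigcapsP => Y /andP []. Qed.

Lemma fcl_min A B : A \subset fcl B -> fcl A \subset fcl B.
Proof.
move=> AB; apply/bigcapsP => Y /andP [fY BY].
have BfY : fcl B \subset Y by apply: bigcap_inf; rewrite fY BY.
by apply: bigcap_inf; rewrite fY (subset_trans AB BfY).
Qed.

Lemma fcl_mono A B : A \subset B -> fcl A \subset fcl B.
Proof. by move=> AB; apply: fcl_min; apply: subset_trans AB (fcl_sup B). Qed.

Lemma fcl_eq A B : A \subset fcl B -> B \subset fcl A -> fcl A = fcl B.
Proof. by move=> h1 h2; apply/eqP; rewrite eqEsubset !fcl_min. Qed.

Lemma Gstar A W : strong A -> weak W -> ks (A :|: W) -> W \subset fcl A.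
Proof.
move=> sA wW kAW; apply/bigcapsP => Y /andP [fY AY].
move: fY => /and3P [sY kY /forallP fY].
apply/negPn/negP => nWY.
set D := A :|: (Y :&: W).
have sD : strong D by exact: (strongS sA (subsetUl _ _)).
have nz : W :\: Y != set0.
  apply/negP => /eqP; move/negP: nWY; apply: contra_not => H.
  by rewrite -setD_eq0 H.
case sDc: (strong (~: D)).
  have kD := ge_k sD sDc.
  have := lamsub Y (A :|: W).
  have -> : Y :|: (A :|: W) = Y :|: (W :\: Y).
    apply/setP => x; move: (subsetP AY x) => /implyP; rewrite !inE; sdec.
  have -> : Y :&: (A :|: W) = D.
    apply/setP => x; move: (subsetP AY x) => /implyP; rewrite !inE; sdec.
  move: kAW kY; rewrite /kseparating => h1 h2 h3.
  have h4 : lam (Y :|: (W :\: Y)) <= k by lia.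
  move: (fY (W :\: Y)); rewrite nz (weakS (subsetDl _ _) wW) /=.
  have -> : W :\: Y \subset ~: Y by apply/subsetP => x; rewrite !inE; sdec.
  by rewrite /kseparating h4.
have wYc : weak (~: Y).
  apply: weakS (negbFE sDc); apply/subsetP => x; move: (subsetP AY x) => /implyP; rewrite !inE; sdec.
move: (fY (~: Y)); rewrite wYc subxx setUCr /kseparating lamT.
have -> : ~: Y != set0.
  apply/negP => /eqP; rewrite -setCT => /setC_inj YT; move/negP: nWY; apply.
  by rewrite YT subsetT.
move: kY; rewrite /kseparating => kY; have := lam0 Y => h.
have -> /= : lam set0 <= k by lia. done.
Qed.


Lemma G2 A B : strong A -> A \subset B -> ks B -> weak (B :\: A) -> B \subset fcl A.
Proof.
move=> sA AB kB wBA.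
have kAW : ks (A :|: (B :\: A)).
  have -> : A :|: (B :\: A) = B.
    by apply/setP => x; move: (subsetP AB x) => /implyP; rewrite !inE; sdec.
  done.
have := Gstar sA wBA kAW => h.
apply/subsetP => x xB; case xA: (x \in A).
  exact: (subsetP (fcl_sup A)).
by apply: (subsetP h); rewrite inE xA xB.
Qed.

Variables (S : {set {set E}}) (P1 : {set E}) (Ps : seq {set E}) (X : {set E}).
Local Notation F := (P1 :: Ps).
Local Notation G := ((P1 :|: X) :: [seq P :\: X | P <- Ps]).
Local Notation n := (size F).
Local Notation p := (petal F).
Local Notation q := (petal G).
Hypothesis hfl : kflower lam k T F.
Hypothesis hnl : no_loose_petals lam k T F.
Hypothesis hX1 : X \subset ~: P1.
Hypothesis hX0 : X != set0.
Hypothesis hXw : weak X.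
Hypothesis hXk : ks (P1 :|: X).

Lemma sizeG : size G = n.
Proof. by rewrite /= size_map. Qed.

Lemma q0 : q 0 = P1 :|: X.
Proof. by []. Qed.

Lemma qS i : q i.+1 = p i.+1 :\: X.
Proof.
rewrite /petal /=; case: (ltnP i (size Ps)) => h.
  by rewrite (nth_map set0).
by rewrite !nth_default ?size_map // set0D.
Qed.

Lemma pdisj i j : (i < n)%N -> (j < n)%N -> i != j -> [disjoint p i & p j].
Proof. by case: hfl => h _; apply: h. Qed.

Lemma pcov x : exists2 i, (i < n)%N & x \in p i.
Proof.
case: hfl => _ [h _]; move: (in_setT x); rewrite -h => /bigcupP [i _ xi].
by exists i.
Qed.

Lemma pstr i : (i < n)%N -> strong (p i).
Proof. by case: hfl => _ [_ h] /h /and3P []. Qed.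

Lemma pks i : (i < n)%N -> ks (p i).
Proof. by case: hfl => _ [_ h] /h /and3P []. Qed.

Lemma pks2 i : (i < n)%N -> ks (p i :|: p (i.+1 %% n)).
Proof. by case: hfl => _ [_ h] /h /and3P []. Qed.

Lemma weak0 : weak set0.
Proof. exact: weakS (sub0set _) hXw. Qed.

Lemma pdx i j x : (i < n)%N -> (j < n)%N -> x \in p i -> x \in p j -> i = j.
Proof.
move=> hi hj xi xj; apply/eqP; apply/negPn/negP => ne.
by move: (disjointFr (pdisj hi hj ne) xi); rewrite xj.
Qed.

Lemma n2 : (1 < n)%N.
Proof.
case eP : Ps => [|P Ps'] //.
have PT : P1 = setT.
  apply/setP => x; rewrite in_setT; have [i hi xi] := pcov x.
  rewrite eP in hi xi; by case: i hi xi.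
move: hX1 hX0; rewrite PT setCT subset0 => /eqP ->; by rewrite eqxx.
Qed.

Lemma pnot1 i x : (0 < i)%N -> (i < n)%N -> x \in p i -> x \in P1 = false.
Proof.
move=> i0 hi xi; apply/negP => x1.
have := pdx hi (ltn_trans i0 hi) xi x1; move=> e; by rewrite e in i0.
Qed.

Lemma pC1 i : (0 < i)%N -> (i < n)%N -> p i \subset ~: P1.
Proof. by move=> i0 hi; apply/subsetP => x xi; rewrite inE (pnot1 i0 hi xi). Qed.

Lemma strong_compl_petal i : (i < n)%N -> strong (~: p i).
Proof.
move=> hi; case: i hi => [|i] hi.
  refine (strongS (pstr n2) _); apply/subsetP => x x1; rewrite inE.
  by apply/negP => x0; have := pdx n2 hi x1 x0.
refine (strongS (pstr (ltn_trans (ltn0Sn i) hi)) _).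
apply/subsetP => x x1; rewrite inE; apply/negP => xi.
by move: x1; rewrite /petal /= (pnot1 (ltn0Sn i) hi xi).
Qed.

Lemma strong_P1 : strong P1.
Proof. exact: (pstr (ltn_trans (ltn0Sn 0) n2)). Qed.

Lemma step1 : X \subset fcl P1.
Proof. by apply: Gstar strong_P1 hXw hXk. Qed.

Lemma fclP1X : fcl P1 = fcl (P1 :|: X).
Proof.
apply: fcl_eq.
  apply: subset_trans (fcl_sup _); exact: subsetUl.
by rewrite subUset fcl_sup step1.
Qed.

Lemma Kl B : B \subset ~: P1 -> strong B -> ks B -> ks (B :\: X).
Proof.
move=> B1 sB kB.
have := lamsub B (~: (P1 :|: X)).
have -> : B :&: ~: (P1 :|: X) = B :\: X.
  by apply/setP => x; move: (subsetP B1 x) => /implyP; rewrite !inE; sdec.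
set D := B :|: _.
have sD : strong D by refine (strongS sB _); exact: subsetUl.
have sDc : strong (~: D).
  refine (strongS strong_P1 _); apply/subsetP => x; move: (subsetP B1 x) => /implyP.
  rewrite !inE; sdec.
have := ge_k sD sDc; rewrite lamC; move: kB hXk; rewrite /kseparating; lia.
Qed.

Lemma other j : (0 < j)%N -> (j < n)%N ->
  (P1 :|: p j = setT) \/ exists2 C, strong C & C \subset ~: (P1 :|: p j).
Proof.
move=> j0 jn; case: (ltnP 2 n) => hn.
  right; set m := if j == 1%N then 2%N else 1%N.
  have mn : (m < n)%N by rewrite /m; case: (j == 1%N) => //; exact: n2.
  have m0 : (0 < m)%N by rewrite /m; case: (j == 1%N).
  have mj : m != j.
    rewrite /m; case: (boolP (j == 1%N)) => [/eqP -> //|hj]; by rewrite eq_sym.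
  exists (p m); first exact: pstr.
  apply/subsetP => x xm; rewrite !inE (pnot1 m0 mn xm) /=.
  by apply/negP => xj; move: mj; rewrite (pdx mn jn xm xj) eqxx.
left; have jj : j = 1%N by lia.
apply/setP => x; rewrite !inE; have [i hi xi] := pcov x.
have : (i < 2)%N by exact: leq_trans hi hn.
case: i hi xi => [|[|i]] //= hi xi _.
  by rewrite xi.
by rewrite jj /petal /= in xi *; rewrite xi orbT.
Qed.

Lemma Kp j : (0 < j)%N -> (j < n)%N -> ks (P1 :|: p j) -> ks (P1 :|: p j :|: X).
Proof.
move=> j0 jn kj.
have := lamsub (P1 :|: p j) (P1 :|: X).
have -> : (P1 :|: p j) :|: (P1 :|: X) = P1 :|: p j :|: X.
  by apply/setP => x; rewrite !inE; sdec.
case: (other j0 jn) => [TT | [C sC CC]].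
  rewrite TT setTU /kseparating lamT => _; have := lam0 P1.
  move: (pks (ltn_trans j0 jn)); rewrite /kseparating /=; lia.
set D := (P1 :|: p j) :&: (P1 :|: X).
have sD : strong D by refine (strongS strong_P1 _); apply/subsetP => x; rewrite !inE; sdec.
have sDc : strong (~: D).
  refine (strongS sC _); apply/subsetP => x; move: (subsetP CC x) => /implyP; rewrite !inE; sdec.
have := ge_k sD sDc; move: kj hXk; rewrite /kseparating; lia.
Qed.

Lemma loose_contra i j : (i < n)%N -> (j < n)%N -> j != i ->
  (j == (i.+1 %% n)%N) || (i == (j.+1 %% n)%N) -> p i \subset fcl (p j) -> False.
Proof.
move=> hi hj ji adj sub; apply: (hnl hi); exists j; split => //; by left.
Qed.

Lemma step3 i : (0 < i)%N -> (i < n)%N -> strong (p i :\: X).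
Proof.
elim: i => [//|i IH] _ hi.
case: (boolP (strong (p i.+1 :\: X))) => // /negPn wi.
have hi' : (i < n)%N by exact: ltn_trans (ltnSn i) hi.
case: i IH hi hi' wi => [|i] IH hi hi' wi.
  have B1 : P1 :|: p 1 :|: X \subset fcl P1.
    rewrite fclP1X; apply: G2.
    - exact: (strongS strong_P1) (subsetUl _ _).
    - by apply/subsetP => x; rewrite !inE; sdec.
    - apply: Kp => //; have := pks2 hi'; by rewrite (modn_small n2).
    - apply: weakS wi; apply/subsetP => x; rewrite !inE; sdec.
  exfalso; apply: (@loose_contra 1%N 0%N) => //.
    by rewrite (modn_small n2) eqxx orbT.
  by apply: subset_trans B1; apply/subsetP => x; rewrite !inE; sdec.
have sA := IH (ltn0Sn i) hi'.
have ksB : ks (p i.+1 :|: p i.+2) by have := pks2 hi'; rewrite (modn_small hi).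
have hA : (p i.+1 :|: p i.+2) :\: X \subset fcl (p i.+1).
  apply: subset_trans (fcl_mono (subsetDl (p i.+1) X)).
  apply: G2 => //.
  - by apply/subsetP => x; rewrite !inE; sdec.
  - apply: Kl => //.
    + by rewrite subUset !pC1.
    + exact: (strongS (pstr hi')) (subsetUl _ _).
  - by apply: weakS wi; apply/subsetP => x; rewrite !inE; sdec.
have hB : p i.+1 :|: p i.+2 \subset fcl (p i.+1 :|: (p i.+2 :\: X)).
  apply: G2 => //.
  - exact: (strongS (pstr hi')) (subsetUl _ _).
  - by apply/subsetP => x; rewrite !inE; sdec.
  - by apply: weakS hXw; apply/subsetP => x; rewrite !inE; sdec.
have hC : fcl (p i.+1 :|: (p i.+2 :\: X)) \subset fcl (p i.+1).
  apply: fcl_min; rewrite subUset fcl_sup /=.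
  by apply: subset_trans hA; apply/subsetP => x; rewrite !inE; sdec.
exfalso; apply: (@loose_contra i.+2 i.+1) => //.
- by rewrite eq_sym; apply/negP => /eqP; lia.
- by rewrite (modn_small hi) eqxx orbT.
- apply: subset_trans hC; apply: subset_trans hB; exact: subsetUr.
Qed.

Lemma step4 i : (0 < i)%N -> (i < n)%N -> fcl (p i :\: X) = fcl (p i).
Proof.
move=> i0 hi; apply: fcl_eq.
  exact: subset_trans (subsetDl _ _) (fcl_sup _).
apply: G2.
- exact: step3.
- exact: subsetDl.
- exact: pks.
- by apply: weakS hXw; apply/subsetP => x; rewrite !inE; sdec.
Qed.


Lemma qmem0 x : (x \in q 0) = (x \in P1) || (x \in X).
Proof. by rewrite q0 inE. Qed.

Lemma qmemS i x : (x \in q i.+1) = (x \in p i.+1) && (x \notin X).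
Proof. by rewrite qS inE andbC. Qed.

Lemma Gflower : kflower lam k T G.
Proof.
split; [|split].
- rewrite sizeG => i j hi hj ij; rewrite -setI_eq0; apply/eqP/setP => x.
  rewrite in_set0 inE.
  case: i j hi hj ij => [|i] [|j] hi hj ij //.
  + rewrite qmem0 qmemS; case xj: (x \in p j.+1); last by rewrite andbF.
    by rewrite (pnot1 (ltn0Sn j) hj xj) /=; case: (x \in X).
  + rewrite qmem0 qmemS; case xi: (x \in p i.+1); last by [].
    by rewrite (pnot1 (ltn0Sn i) hi xi) /=; case: (x \in X).
  + rewrite !qmemS; case xi: (x \in p i.+1); last by [].
    case xj: (x \in p j.+1); last by rewrite andbF.
    by move: ij; rewrite (pdx hi hj xi xj) eqxx.
- apply/setP => x; rewrite in_setT; apply/bigcupP.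
  have n0 : (0 < size G)%N by rewrite sizeG.
  case xX: (x \in X).
    by exists (Ordinal n0) => //; rewrite qmem0 xX orbT.
  have [i hi xi] := pcov x.
  case: i hi xi => [|i] hi xi.
    by exists (Ordinal n0) => //; rewrite qmem0 xi.
  have hi' : (i.+1 < size G)%N by rewrite sizeG.
  by exists (Ordinal hi') => //; rewrite qmemS xi xX.
- rewrite sizeG => i hi; case: i hi => [|i] hi.
  + rewrite (modn_small n2) /=; apply/and3P; split.
    * exact: (strongS strong_P1 (subsetUl _ _)).
    * exact: hXk.
    * have -> : q 0 :|: q 1 = P1 :|: p 1 :|: X.
        apply/setP => x; rewrite inE qmem0 qmemS !inE; sdec.
      apply: (Kp (ltn0Sn 0) n2); have := pks2 (ltn_trans (ltnSn 0) n2); by rewrite (modn_small n2).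
  + have i0 : (0 < i.+1)%N by [].
    apply/and3P; split.
    * rewrite qS; exact: step3.
    * rewrite qS; apply: Kl; [exact: pC1|exact: pstr|exact: pks].
    * case: (ltnP i.+2 n) => hi2.
        rewrite (modn_small hi2).
        have -> : q i.+1 :|: q i.+2 = (p i.+1 :|: p i.+2) :\: X.
          apply/setP => x; rewrite inE !qmemS !inE; sdec.
        apply: Kl.
        -- by rewrite subUset !pC1.
        -- exact: (strongS (pstr hi)) (subsetUl _ _).
        -- by have := pks2 hi; rewrite (modn_small hi2).
      have e : i.+2 = n by apply/eqP; rewrite eqn_leq hi2 hi.
      rewrite e modnn.
      have -> : q i.+1 :|: q 0 = P1 :|: p i.+1 :|: X.
        apply/setP => x; rewrite inE qmem0 qmemS !inE; sdec.
      apply: Kp => //; have := pks2 hi; rewrite e modnn setUC; done.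
Qed.

Definition U (Fs : seq {set E}) (J : pred nat) : {set E} :=
  locked [set x | [exists i : 'I_(size Fs), J i && (x \in petal Fs i)]].

Lemma memU Fs J x :
  reflect (exists2 i, (i < size Fs)%N & J i && (x \in petal Fs i)) (x \in U Fs J).
Proof.
rewrite /U -lock inE; apply: (iffP existsP) => [[i hi]|[i hi h]].
  by exists i.
by exists (Ordinal hi).
Qed.

Lemma U_disp Fs J : displays Fs (U Fs J).
Proof.
exists [set i : 'I_(size Fs) | J i]; apply/setP => x; apply/memU/bigcupP.
  by move=> [i hi /andP [Ji xi]]; exists (Ordinal hi); rewrite // inE.
by move=> [i]; rewrite inE => Ji xi; exists i; rewrite ?ltn_ord ?Ji.
Qed.

Lemma disp_U Fs Y : displays Fs Y -> exists J, Y = U Fs J.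
Proof.
move=> [I ->].
exists (fun i => [exists j : 'I_(size Fs), (nat_of_ord j == i) && (j \in I)]).
apply/setP => x; apply/bigcupP/memU.
  move=> [i iI xi]; exists i => //; rewrite xi andbT; apply/existsP.
  by exists i; rewrite eqxx iI.
move=> [i hi /andP [/existsP [j /andP [/eqP ji jI]] xi]].
by exists j; rewrite // ji.
Qed.

Lemma U_compl Fs J : kflower lam k T Fs -> ~: U Fs J = U Fs (predC J).
Proof.
move=> [hd [hc _]]; apply/setP => x; rewrite inE.
apply/negP/memU.
  move=> nU; move: (in_setT x); rewrite -hc => /bigcupP [i _ xi].
  exists i => //; rewrite xi andbT /=; apply/negP => Ji; apply: nU.
  by apply/memU; exists i; rewrite ?Ji.
move=> [i hi /andP [nJi xi]] /memU [j hj /andP [Jj xj]].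
case: (eqVneq (i : nat) j) => [e|ne].
  by move: nJi; rewrite /= e Jj.
by move: (disjointFr (hd _ _ hi hj ne) xi); rewrite xj.
Qed.


Lemma U_ex_strong Fs J : kflower lam k T Fs ->
  (exists2 i, (i < size Fs)%N & J i) -> strong (U Fs J).
Proof.
move=> [_ [_ hs]] [i hi Ji]; have /and3P [si _ _] := hs i hi.
refine (strongS si _); apply/subsetP => x xi; apply/memU; exists i => //.
by rewrite Ji xi.
Qed.

Lemma U_strong_ex Fs J : strong (U Fs J) -> exists2 i, (i < size Fs)%N & J i.
Proof.
move=> sU; case: (boolP [exists i : 'I_(size Fs), J i]) => [/existsP [i Ji]|ne].
  by exists i.
exfalso; move/negP: sU; apply; apply: weakS weak0; apply/subsetP => x.
move/memU => [i hi /andP [Ji _]]; case/negP: ne.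
by apply/existsP; exists (Ordinal hi).
Qed.

Lemma strong_transfer J : strong (U F J) = strong (U G J).
Proof.
apply/idP/idP => /U_strong_ex [i hi Ji].
  by apply: U_ex_strong Gflower _; exists i; rewrite ?sizeG.
by apply: U_ex_strong hfl _; exists i; rewrite -?sizeG.
Qed.

Lemma UG J : U G J = if J 0 then U F J :|: X else U F J :\: X.
Proof.
have n0 : (0 < n)%N by [].
apply/setP => x; case J0: (J 0); rewrite !inE; apply/idP/idP.
- move/memU => [[|i] hi /andP [Ji xi]].
    move: xi; rewrite qmem0 => /orP [x1|->]; last by rewrite orbT.
    by apply/orP; left; apply/memU; exists 0%N; rewrite ?J0.
  move: xi; rewrite qmemS => /andP [xi _]; apply/orP; left; apply/memU.
  by exists i.+1; rewrite -?sizeG ?Ji.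
- move/orP => [/memU [[|i] hi /andP [Ji xi]] | xX].
  + by apply/memU; exists 0%N; rewrite ?sizeG // J0 qmem0 xi.
  + case xX: (x \in X).
      by apply/memU; exists 0%N; rewrite ?sizeG // J0 qmem0 xX orbT.
    by apply/memU; exists i.+1; rewrite ?sizeG // Ji qmemS xi xX.
  + by apply/memU; exists 0%N; rewrite ?sizeG // J0 qmem0 xX orbT.
- move/memU => [[|i] hi /andP [Ji xi]]; first by rewrite J0 in Ji.
  move: xi; rewrite qmemS => /andP [xi ->] /=; apply/memU.
  by exists i.+1; rewrite -?sizeG ?Ji.
- move=> /andP [xX /memU [[|i] hi /andP [Ji xi]]]; first by rewrite J0 in Ji.
  by apply/memU; exists i.+1; rewrite ?sizeG // Ji qmemS xi xX.
Qed.

Lemma fclUG J : fcl (U G J) = fcl (U F J).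
Proof.
rewrite UG; case J0: (J 0).
  have P1U : P1 \subset U F J.
    by apply/subsetP => x x1; apply/memU; exists 0%N; rewrite ?J0.
  apply: fcl_eq.
    by rewrite subUset fcl_sup (subset_trans step1 (fcl_mono P1U)).
  exact: subset_trans (subsetUl _ _) (fcl_sup _).
apply: fcl_eq; first exact: subset_trans (subsetDl _ _) (fcl_sup _).
apply/subsetP => x /memU [[|i] hi /andP [Ji xi]]; first by rewrite J0 in Ji.
have h1 : p i.+1 \subset fcl (p i.+1 :\: X) by rewrite step4 // fcl_sup.
apply: (subsetP (fcl_mono _)) (subsetP h1 x xi).
apply/subsetP => y; rewrite !inE => /andP [-> yi]; apply/memU; exists i.+1 => //.
by rewrite Ji yi.
Qed.

Lemma ks_shrink J : J 0 = false -> ks (U F J) -> ks (U F J :\: X).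
Proof.
move=> J0 kU; case: (boolP [exists i : 'I_n, J i]) => [/existsP [i Ji]|ne].
  apply: Kl => //.
    apply/subsetP => x /memU [[|j] hj /andP [Jj xj]]; first by rewrite J0 in Jj.
    by rewrite inE (pnot1 (ltn0Sn j) hj xj).
  by apply: U_ex_strong hfl _; exists i.
have e : U F J = set0.
  apply/setP => x; rewrite in_set0; apply/negP => /memU [i hi /andP [Ji _]].
  by move/negP: ne; apply; apply/existsP; exists (Ordinal hi).
by move: kU; rewrite e set0D.
Qed.

Lemma ks_grow J : J 0 = false -> ks (U F J :\: X) -> ks (U F J).
Proof.
move=> J0 kU.
pose A m := (U F J :\: X) :|: U F (fun i => J i && (i < m)%N).
have H : forall m, ks (A m).
  elim => [|m IH].
    have -> : A 0%N = U F J :\: X.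
      apply/setP => x; rewrite /A inE; case: (x \in U F J :\: X) => //=.
      by apply/negP => /memU [i _ /andP [/andP [_ ]]]; rewrite ltn0.
    done.
  case Jm: (J m && (m < n)%N).
    move/andP: Jm => [Jm mn].
    have m0 : (0 < m)%N by case: m Jm {IH} mn => //; rewrite J0.
    have xm : forall x, x \in p m -> x \in U F J.
      by move=> x xm; apply/memU; exists m; rewrite ?Jm.
    have e1 : A m.+1 = A m :|: p m.
      apply/setP => x; rewrite /A !inE; apply/idP/idP.
        case/orP => [->//|/memU [i hi /andP [/andP [Ji im] xi]]].
        rewrite ltnS leq_eqVlt in im; case/orP: im => [/eqP e|im].
          by rewrite -e xi !orbT.
        by apply/orP; left; apply/orP; right; apply/memU; exists i; rewrite ?Ji ?im.
      case/orP => [/orP [->//|/memU [i hi /andP [/andP [Ji im] xi]]]|xi].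
        by apply/orP; right; apply/memU; exists i; rewrite ?Ji ?xi // (ltn_trans im).
      by apply/orP; right; apply/memU; exists m; rewrite ?Jm ?xi ?ltnSn.
    have e2 : A m :&: p m = p m :\: X.
      apply/setP => x; rewrite /A !inE; case xi: (x \in p m); rewrite ?andbF //.
      rewrite (xm x xi) andbT.
      case: (boolP (x \in U F (fun i => J i && (i < m)%N))) => [/memU [i hi /andP [/andP [_ im] xi']]|_].
        by move: im; rewrite (pdx hi mn xi' xi) ltnn.
      by rewrite orbF.
    have := lamsub (A m) (p m); rewrite -e1 e2.
    have sD : strong (p m :\: X) by exact: step3.
    have sDc : strong (~: (p m :\: X)).
      refine (strongS strong_P1 _); apply/subsetP => x x1; rewrite !inE.
      apply/negP => /andP [_ xi]; by rewrite (pnot1 m0 mn xi) in x1.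
    have := ge_k sD sDc; have := pks mn; move: IH; rewrite /kseparating; lia.
  have -> : A m.+1 = A m.
    apply/setP => x; rewrite /A !inE; congr (_ || _); apply/idP/idP.
      move/memU => [i hi /andP [/andP [Ji im] xi]]; apply/memU; exists i => //.
      rewrite Ji xi /= andbT; rewrite ltnS leq_eqVlt in im; case/orP: im => [/eqP e|//].
      by move: Jm; rewrite -e Ji hi.
    move/memU => [i hi /andP [/andP [Ji im] xi]]; apply/memU; exists i => //.
    by rewrite Ji xi (ltn_trans im).
  done.
have -> : U F J = A n.
  apply/setP => x; rewrite /A !inE; apply/idP/idP.
    move=> xU; apply/orP; right; move/memU: xU => [i hi /andP [Ji xi]].
    by apply/memU; exists i; rewrite ?Ji ?hi ?xi.
  case/orP => [/andP [_ ->] //|/memU [i hi /andP [/andP [Ji _] xi]]].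
  by apply/memU; exists i; rewrite ?Ji.
exact: H.
Qed.

Lemma ksUG J : ks (U G J) = ks (U F J).
Proof.
have aux : forall J', J' 0 = false -> ks (U F J' :\: X) = ks (U F J').
  by move=> J' J0; apply/idP/idP; [exact: ks_grow|exact: ks_shrink].
rewrite UG; case J0: (J 0); last exact: aux.
rewrite /kseparating -lamC setCU -setDE (U_compl J hfl) -[lam (U F J)]lamC (U_compl J hfl).
by apply: aux; rewrite /= J0.
Qed.

Lemma TeqUG J : T_equiv lam k T (U F J) (U G J).
Proof.
by rewrite /T_equiv (U_compl J hfl) (U_compl J Gflower) !fclUG.
Qed.

Lemma TeqGU J : T_equiv lam k T (U G J) (U F J).
Proof.
by rewrite /T_equiv (U_compl J hfl) (U_compl J Gflower) !fclUG.
Qed.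

Hypothesis hS : tree_compatible lam k T S.

Lemma kS_strong Y : kS_sep lam k S Y -> strong Y && strong (~: Y).
Proof.
case: hS => h1 _ /and3P [_ YS YcS].
have /and3P [_ _ a] := h1 _ YS; have /and3P [_ _ b] := h1 _ YcS.
by rewrite setCK in b; rewrite a b.
Qed.

Lemma prec1 : flower_preceq lam k T S F G.
Proof.
move=> Y /disp_U [J ->] kSY; exists (U G J); split; first exact: U_disp.
  case: hS => _ [S1 _]; apply: (S1 _ _ kSY _ (TeqUG J)).
  have /andP [a b] := kS_strong kSY.
  move: a b; rewrite (U_compl J hfl) !strong_transfer -(U_compl J Gflower) => a b.
  apply/and3P; split => //; rewrite ksUG; by case/and3P: kSY.
exact: TeqUG.
Qed.

Lemma prec2 : flower_preceq lam k T S G F.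
Proof.
move=> Y /disp_U [J ->] kSY; exists (U F J); split; first exact: U_disp.
  case: hS => _ [S1 _]; apply: (S1 _ _ kSY _ (TeqGU J)).
  have /andP [a b] := kS_strong kSY.
  move: a b; rewrite (U_compl J Gflower) -!strong_transfer -(U_compl J hfl) => a b.
  apply/and3P; split => //; rewrite -ksUG; by case/and3P: kSY.
exact: TeqGU.
Qed.

Lemma main :
  (kflower lam k T G /\ flower_equiv lam k T S F G) /\
  (fcl P1 = fcl (P1 :|: X) /\ forall P, P \in Ps -> fcl (P :\: X) = fcl P).
Proof.
split; first by split; [exact: Gflower | split; [exact: prec1 | exact: prec2]].
split; first exact: fclP1X.
move=> P /(nthP set0) [i hi <-].
have : fcl (p i.+1 :\: X) = fcl (p i.+1) by apply: step4; rewrite /= ltnS.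
done.
Qed.

End Basic.

Theorem lemma4p6 (E : finType) (lam : {set E} -> int) (k : int)
  (T S : {set {set E}}) (P1 : {set E}) (Ps : seq {set E}) (X : {set E}) :
  connectivity_system lam ->
  tangle lam k T ->
  tree_compatible lam k T S ->
  kflower lam k T (P1 :: Ps) ->
  S_order_ge lam k T S 2 (P1 :: Ps) ->
  no_loose_petals lam k T (P1 :: Ps) ->
  X \subset ~: P1 -> X != set0 -> weak T X -> kseparating lam k (P1 :|: X) ->
  (kflower lam k T ((P1 :|: X) :: [seq P :\: X | P <- Ps]) /\
   flower_equiv lam k T S (P1 :: Ps) ((P1 :|: X) :: [seq P :\: X | P <- Ps])) /\
  (fcl lam k T P1 = fcl lam k T (P1 :|: X) /\
   forall P, P \in Ps -> fcl lam k T (P :\: X) = fcl lam k T P).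
Proof.
move=> hcs ht hS hfl _ hnl hX1 hX0 hXw hXk.
exact: (main hcs ht hfl hnl hX1 hX0 hXw hXk hS).
Qed.
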